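(* Let $F:\mathbb{R}^d\to\mathbb{R}$ be continuously differentiable with $L$-Lipschitz gradient and lower bounded, $F_*:=\inf_\theta F(\theta)>-\infty$. Consider the simplified curvature-aware Adam iteration described in the context, and suppose the stochastic gradients satisfy, for all $k$, $\mathbb{E}[g_k\mid\theta_k]=\nabla F(\theta_k)$, $\mathbb{E}[\|g_k-\nabla F(\theta_k)\|^2\mid\theta_k]\le\sigma^2$, and $\|g_k\|_\infty\le\|g_k\|\le G$ for a constant $G>0$. Let the stepsize satisfy $\eta\le\min(1,1/L)$. Then there exist positive constants $C_1,C_2,C_3$, depending only on $L,\delta,\beta_1,G,C_\alpha,d$, such that for every $T\ge 1$, $$\frac{1}{T}\sum_{k=0}^{T-1}\mathbb{E}\|\nabla F(\theta_k)\|^2\le \frac{C_1\big(F(\theta_0)-F_*+G^2\big)}{\eta T}+C_2\eta+C_3\sigma^2.$$ In particular, choosing $\eta=\Theta(T^{-1/2})$ yields a bound of order $\mathcal{O}(T^{-1/2})+\mathcal{O}(\sigma^2)$.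
   Context: Simplified curvature-aware Adam iteration: given parameters $\beta_1,\beta_2\in[0,1)$, $\delta>0$, stepsize $\eta>0$, a base coefficient $\alpha_{\mathrm{base}}>0$, and stochastic gradient estimators $g_k$ of $\nabla F(\theta_k)$, the iterates are $\tilde g_k:=g_k+\alpha_k(g_k-g_{k-1})$, $m_k:=\beta_1 m_{k-1}+(1-\beta_1)\tilde g_k$, $v_k:=\beta_2 v_{k-1}+(1-\beta_2)\tilde g_k^{2}$ (coordinatewise), $\theta_{k+1}:=\theta_k-\eta\, m_k/(\sqrt{v_k}+\delta)$ (coordinatewise), with initialization $m_{-1}=0$, $v_{-1}=0$, $\theta_{-1}=\theta_0$, $\alpha_0=0$. The coefficients satisfy $|\alpha_k|\le C_\alpha:=2\alpha_{\mathrm{base}}$ for all $k$. $\|\cdot\|$ is the Euclidean norm. *)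

(* Defs.v *)
From HB Require Import structures.
From mathcomp Require Import all_boot all_order all_algebra.
From mathcomp Require Import all_classical all_reals all_analysis.
Set Implicit Arguments. Unset Strict Implicit. Unset Printing Implicit Defensive.
Import Order.TTheory GRing.Theory Num.Theory.
Import numFieldNormedType.Exports.
Local Open Scope classical_set_scope.
Local Open Scope ring_scope.

Section Defs.
Variable R : realType.

Definition sqnorm (d : nat) (x : 'rV[R]_d) : R := \sum_(i < d) x 0 i ^+ 2.
Definition enorm (d : nat) (x : 'rV[R]_d) : R := Num.sqrt (sqnorm x).

Definition dotv (d : nat) (x y : 'rV[R]_d) : R := \sum_(i < d) x 0 i * y 0 i.

(** One step of the simplified curvature-aware Adam recursion.
    State (theta_k, m_{k-1}, v_{k-1}); input gt = tilde g_k.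
    Returns (theta_{k+1}, m_k, v_k). *)
Definition adam_step (d : nat) (beta1 beta2 delta eta : R)
    (s : 'rV[R]_d * 'rV[R]_d * 'rV[R]_d) (gt : 'rV[R]_d) :=
  let: (th, m, v) := s in
  let m' := beta1 *: m + (1 - beta1) *: gt in
  let v' := beta2 *: v + (1 - beta2) *: map_mx (fun z => z ^+ 2) gt in
  (th - eta *: (\row_j (m' 0 j / (Num.sqrt (v' 0 j) + delta))), m', v').

(** tilde g_k := g_k + alpha_k (g_k - g_{k-1}); at k = 0 the term
    g_{-1} is irrelevant since alpha_0 = 0 (we set g_{-1} := g_0). *)
Definition gtilde (d : nat) (g : nat -> 'rV[R]_d) (alpha : nat -> R) (k : nat)
  : 'rV[R]_d := g k + alpha k *: (g k - g k.-1).

Fixpoint adam_state (d : nat) (beta1 beta2 delta eta : R) (th0 : 'rV[R]_d)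
    (g : nat -> 'rV[R]_d) (alpha : nat -> R) (k : nat)
    : 'rV[R]_d * 'rV[R]_d * 'rV[R]_d :=
  match k with
  | 0 => (th0, 0, 0)
  | k'.+1 => adam_step beta1 beta2 delta eta
               (adam_state beta1 beta2 delta eta th0 g alpha k') (gtilde g alpha k')
  end.

Definition adam_theta (d : nat) (beta1 beta2 delta eta : R) (th0 : 'rV[R]_d)
    (g : nat -> 'rV[R]_d) (alpha : nat -> R) (k : nat) : 'rV[R]_d :=
  (adam_state beta1 beta2 delta eta th0 g alpha k).1.1.

(** sigma(X): the sigma-algebra on Omega generated by a random vector
    X : Omega -> R^d (Borel sets of R^d = product of the coordinate Borel
    sigma-algebras). *)
Definition sigma_of (T : Type) (d : nat) (X : T -> 'rV[R]_d) : set (set T) :=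
  <<s \bigcup_(i in [set: 'I_d])
        preimage_set_system setT (fun w => X w 0 i) (@measurable _ R) >>.

End Defs.

(* Main.v *)
Require Import Defs.
From HB Require Import structures.
From mathcomp Require Import all_boot all_order all_algebra.
From mathcomp Require Import all_classical all_reals all_analysis.
From mathcomp Require Import ring lra zify.
Import Order.TTheory GRing.Theory Num.Theory.
Import numFieldNormedType.Exports.
Local Open Scope classical_set_scope.
Local Open Scope ring_scope.
Import measurable_realfun.

Set Implicit Arguments. Unset Strict Implicit.

Section H1.
Variable R : realType.
Variable d : nat.
Implicit Types x y z : 'rV[R]_d.

Lemma sqnorm_ge0 x : 0 <= sqnorm x.
Proof. by apply: sumr_ge0 => i _; exact: sqr_ge0. Qed.

Lemma enorm_ge0 x : 0 <= enorm x.
Proof. exact: sqrtr_ge0. Qed.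

Lemma enorm_sq x : enorm x ^+ 2 = sqnorm x.
Proof. by rewrite /enorm sqr_sqrtr // sqnorm_ge0. Qed.

Lemma sqnorm_le_sq x c : enorm x <= c -> sqnorm x <= c ^+ 2.
Proof.
move=> h; rewrite -enorm_sq !expr2; apply: ler_pM => //; exact: enorm_ge0.
Qed.

Lemma sqnorm_lip x y L : 0 <= L -> enorm x <= L * enorm y ->
  sqnorm x <= L ^+ 2 * sqnorm y.
Proof.
move=> L0 h; rewrite -!enorm_sq -exprMn !expr2; apply: ler_pM => //; exact: enorm_ge0.
Qed.

Lemma coord_le_sqnorm x i : x 0 i ^+ 2 <= sqnorm x.
Proof.
rewrite /sqnorm (bigD1 i) //= lerDl; apply: sumr_ge0 => j _; exact: sqr_ge0.
Qed.

Lemma sqnorm_coord_le (a : 'rV[R]_d) (c : R) (b : 'I_d -> R) :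
  (forall i, a 0 i ^+ 2 <= b i) -> sqnorm a <= \sum_i b i.
Proof. by move=> h; apply: ler_sum => i _; exact: h. Qed.

Lemma sqnormB_sym x y : sqnorm (x - y) = sqnorm (y - x).
Proof. by apply: eq_bigr => i _; rewrite !mxE; ring. Qed.

Lemma sqnormD2 x y : sqnorm (x + y) <= 2 * sqnorm x + 2 * sqnorm y.
Proof.
rewrite /sqnorm !mulr_sumr -big_split /=; apply: ler_sum => i _.
rewrite mxE; set a := x 0 i; set b := y 0 i.
have : 0 <= (a - b) ^+ 2 by exact: sqr_ge0.
lra.
Qed.

Lemma sqnormD3 x y z : sqnorm (x + y + z) <= 3 * sqnorm x + 3 * sqnorm y + 3 * sqnorm z.
Proof.
rewrite /sqnorm !mulr_sumr -!big_split /=; apply: ler_sum => i _.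
rewrite !mxE; set a := x 0 i; set b := y 0 i; set c := z 0 i.
have : 0 <= (a - b) ^+ 2 by exact: sqr_ge0.
have : 0 <= (a - c) ^+ 2 by exact: sqr_ge0.
have : 0 <= (b - c) ^+ 2 by exact: sqr_ge0.
nra.
Qed.

Lemma sqnorm_eps x y e : 0 < e ->
  sqnorm (x + y) <= (1 + e) * sqnorm x + (1 + e^-1) * sqnorm y.
Proof.
move=> e0; rewrite /sqnorm !mulr_sumr -!big_split /=; apply: ler_sum => i _.
rewrite !mxE; set a := x 0 i; set b := y 0 i.
have : 0 <= (e * a - b) ^+ 2 by exact: sqr_ge0.
have he : e * e^-1 = 1 by rewrite mulfV // gt_eqF.
have hi : 0 < e^-1 by rewrite invr_gt0.
move=> h.
have : 0 <= e^-1 * (e * a - b) ^+ 2 by exact: mulr_ge0 (ltW hi) h.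
have -> : e^-1 * (e * a - b) ^+ 2 = e * a ^+ 2 - 2 * a * b + e^-1 * b ^+ 2.
  by rewrite !expr2 ; set u := e^-1; have -> : u = e^-1 by []; 
     rewrite -{1}[e^-1]mul1r; field; rewrite gt_eqF.
rewrite !expr2 => h2; nra.
Qed.

Lemma sqnorm_convex x y (b : R) : 0 <= b <= 1 ->
  sqnorm (b *: x + (1 - b) *: y) <= b * sqnorm x + (1 - b) * sqnorm y.
Proof.
move=> /andP[b0 b1]; rewrite /sqnorm !mulr_sumr -!big_split /=; apply: ler_sum => i _.
rewrite !mxE; set a := x 0 i; set c := y 0 i.
have : 0 <= b * (1 - b) * (a - c) ^+ 2 by apply: mulr_ge0; [nra| exact: sqr_ge0].
rewrite !expr2; nra.
Qed.

Lemma dotv_young x y L : 0 < L ->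
  2 * dotv x y <= L^-1 * sqnorm x + L * sqnorm y.
Proof.
move=> L0; rewrite /dotv /sqnorm !mulr_sumr -!big_split /=; apply: ler_sum => i _.
set a := x 0 i; set b := y 0 i.
have hi : 0 < L^-1 by rewrite invr_gt0.
have : 0 <= L^-1 * (a - L * b) ^+ 2 by apply: mulr_ge0; [exact: ltW| exact: sqr_ge0].
have -> : L^-1 * (a - L * b) ^+ 2 = L^-1 * a ^+ 2 - 2 * (a * b) + L * b ^+ 2.
  by field; rewrite gt_eqF.
lra.
Qed.

End H1.

Unset Implicit Arguments. Set Strict Implicit.

Set Implicit Arguments. Unset Strict Implicit.

Section H2.
Variable R : realType.
Variable d : nat.

Lemma sqnormZ (c : R) (v : 'rV[R]_d) : sqnorm (c *: v) = c ^+ 2 * sqnorm v.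
Proof. rewrite /sqnorm mulr_sumr; apply: eq_bigr => i _; rewrite mxE; ring. Qed.

Lemma dotvB (a b v : 'rV[R]_d) : dotv (a - b) v = dotv a v - dotv b v.
Proof. rewrite /dotv -sumrB; apply: eq_bigr => i _; rewrite !mxE; ring. Qed.

Lemma descent (F : 'rV[R]_d -> R) (gradF : 'rV[R]_d -> 'rV[R]_d) (L : R) :
  0 < L ->
  (forall x, differentiable F x) ->
  (forall x v, 'd F x v = dotv (gradF x) v) ->
  (forall x y, enorm (gradF x - gradF y) <= L * enorm (x - y)) ->
  forall x v, F (x + v) <= F x + dotv (gradF x) v + L * sqnorm v.
Proof.
move=> L0 dF dFE lip x v.
pose phi := fun t : R => F (x + t *: v).
have hd : forall t : R, is_derive (t : R^o) (1 : R^o) phi (dotv (gradF (x + t *: v)) v).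
  move=> t.
  have E : (fun h : R => h^-1 *: ((phi \o shift t) (h *: 1) - phi t)) =
           (fun h : R => h^-1 *: ((F \o shift (x + t *: v)) (h *: v) - F (x + t *: v))).
    apply: funext => h; rewrite /phi /= /shift /=; congr (_ *: (F _ - _)).
    have -> : h%:A = h by rewrite -[h%:A]/(h * 1) mulr1.
    by rewrite scalerDl addrCA.
  apply: DeriveDef.
    rewrite /derivable E; exact: diff_derivable.
  rewrite /derive E -/(derive F (x + t *: v) v) deriveE //; exact: dFE.
have cont : {within `[0, 1], continuous phi}.
  apply: continuous_subspaceT => t.
  apply: differentiable_continuous; apply/derivable1_diffP.
  by case: (hd t).
have [c cI Hc] := MVT (ltr01 : (0:R) < 1) (fun t _ => hd t) cont.
rewrite /phi scale0r addr0 scale1r subr0 mulr1 in Hc.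
move: cI; rewrite in_itv /= => /andP[c0 c1].
have : F (x + v) = F x + dotv (gradF x) v + dotv (gradF (x + c *: v) - gradF x) v.
  by rewrite dotvB -Hc; ring.
move=> ->.
have hy := dotv_young (gradF (x + c *: v) - gradF x) v L0.
have hs : sqnorm (gradF (x + c *: v) - gradF x) <= L ^+ 2 * sqnorm v.
  apply: le_trans (sqnorm_lip (ltW L0) (lip _ _)) _.
  rewrite addrC addKr sqnormZ.
  rewrite ler_pM2l ?exprn_gt0 //.
  rewrite -[leRHS]mul1r ler_wpM2r ?sqnorm_ge0 //.
  have : c * c <= 1 by nra.
  by rewrite expr2.
have hL : L^-1 * sqnorm (gradF (x + c *: v) - gradF x) <= L * sqnorm v.
  rewrite -(@ler_pM2l _ L) // mulrA mulfV ?gt_eqF // mul1r.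
  by rewrite mulrA -expr2.
lra.
Qed.

End H2.

Unset Implicit Arguments. Set Strict Implicit.

Set Implicit Arguments. Unset Strict Implicit.

Section H3.
Variable R : realType.
Variables (dT : measure_display) (T : measurableType dT).

Lemma measurable_sq (f : T -> R) : measurable_fun setT f ->
  measurable_fun setT (fun w => f w ^+ 2).
Proof. move=> mf; under eq_fun do rewrite expr2; exact: measurable_funM. Qed.

Lemma measurable_bigmin (I : Type) (a : T -> R) (b : I -> T -> R) (s : seq I) :
  measurable_fun setT a -> (forall i, measurable_fun setT (b i)) ->
  measurable_fun setT (fun w => \big[Num.min/a w]_(i <- s) b i w).
Proof.
move=> ma mb; elim: s => [|y s IH].
  by under eq_fun do rewrite big_nil.
under eq_fun do rewrite big_cons.
exact: measurable_minr.
Qed.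

Lemma bigmin_ge (I : Type) (a : R) (b : I -> R) (s : seq I) c :
  c <= a -> (forall i, c <= b i) -> c <= \big[Num.min/a]_(i <- s) b i.
Proof.
move=> ca cb; elim: s => [|y s IH]; first by rewrite big_nil.
by rewrite big_cons le_min cb IH.
Qed.

Lemma bigmin_le (I : eqType) (a : R) (b : I -> R) (s : seq I) z :
  z \in s -> \big[Num.min/a]_(i <- s) b i <= b z.
Proof.
elim: s => [//|y s IH]; rewrite inE big_cons ge_min => /orP[/eqP->|zs].
  by rewrite lexx.
by rewrite IH // orbT.
Qed.

Variable d : nat.

Lemma measurable_enorm (x : T -> 'rV[R]_d) (q : 'rV[R]_d) :
  (forall i, measurable_fun setT (fun w => x w 0 i)) ->
  measurable_fun setT (fun w => enorm (x w - q)).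
Proof.
move=> mx; rewrite /enorm /sqnorm.
apply: measurableT_comp; first exact: continuous_measurable_fun (@sqrt_continuous R).
apply: measurable_sum => i.
under eq_fun do rewrite !mxE.
apply: measurable_sq; apply: measurable_funB => //; exact: measurable_cst.
Qed.

Lemma lip_measurable (h : 'rV[R]_d -> R) (L : R) (x : T -> 'rV[R]_d) :
  0 <= L -> (forall a b, `|h a - h b| <= L * enorm (a - b)) ->
  (forall i, measurable_fun setT (fun w => x w 0 i)) ->
  measurable_fun setT (fun w => h (x w)).
Proof.
move=> L0 hL mx.
pose K (N : nat) : nat := N.+1.
pose q (N : nat) (z : {ffun 'I_d -> 'I_(2 * (K N * K N)).+1}) : 'rV[R]_d :=
  \row_i (((z i : nat)%:R - (K N * K N)%:R) / (K N)%:R).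
pose psi N z w := h (q N z) + L * enorm (x w - q N z).
pose z0 N : {ffun 'I_d -> 'I_(2 * (K N * K N)).+1} := [ffun => ord0].
pose phi N w := \big[Num.min/psi N (z0 N) w]_(z <- index_enum _) psi N z w.
have mpsi N z : measurable_fun setT (psi N z).
  apply: measurable_funD; first exact: measurable_cst.
  apply: measurable_funM; first exact: measurable_cst.
  exact: measurable_enorm.
apply: (@measurable_fun_cvg _ _ _ _ phi) => [N|w _].
  exact: measurable_bigmin.
have lower N z : h (x w) <= psi N z w.
  rewrite /psi; have := hL (x w) (q N z); rewrite ler_norml => /andP[_].
  lra.
pose B := \sum_i `|x w 0 i|.
have B0 : 0 <= B by apply: sumr_ge0 => i _; exact: normr_ge0.
pose N0 := Num.Def.archi_bound B.
have hN0 := archi_boundP B0.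
pose c := 2 * L * Num.sqrt d%:R.
apply: (@squeeze_cvgr _ _ _ _ (fun _ => h (x w)) (fun N => h (x w) + c * harmonic N)).
- exists N0 => // N /= hN; apply/andP; split.
    by apply: bigmin_ge => //; apply: lower.
  have hk : harmonic N = (K N)%:R^-1 :> R by [].
  set k := K N in hk *.
  have k0 : 0 < k%:R :> R by rewrite ltr0n.
  have hxi i : `|x w 0 i| <= k%:R.
    apply: le_trans (_ : B <= k%:R).
      rewrite /B (bigD1 i) //= lerDl; apply: sumr_ge0 => j _; exact: normr_ge0.
    apply: (le_trans (ltW hN0)); rewrite ler_nat /k /K; lia.
  pose m i : int := Num.floor (k%:R * x w 0 i).
  have mb i : (- (k * k)%:Z <= m i) && (m i <= (k * k)%:Z).
    have := hxi i; rewrite ler_norml => /andP[h1 h2].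
    apply/andP; split.
      rewrite floor_ge_int rmorphN /= -[((k * k)%:Z)%:~R]/((k * k)%:R : R) natrM.
      rewrite -mulrN; apply: ler_wpM2l => //; exact: ltW.
    rewrite -(ler_int R); apply: le_trans (floor_le _) _.
    rewrite -[((k * k)%:Z)%:~R]/((k * k)%:R : R) natrM.
    apply: ler_wpM2l => //; exact: ltW.
  pose zs : {ffun 'I_d -> 'I_(2 * (k * k)).+1} :=
    [ffun i => inord (absz (m i + (k * k)%:Z))].
  have zsE i : ((zs i : nat)%:R : R) = (m i)%:~R + (k * k)%:R.
    rewrite ffunE inordK.
      rewrite natr_absz ger0_norm.
        by rewrite intrD.
      have := mb i; lia.
    have := mb i; lia.
  have qE i : q N zs 0 i = (m i)%:~R / k%:R by rewrite mxE zsE addrK.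
  have hqi i : (x w - q N zs) 0 i ^+ 2 <= harmonic N ^+ 2.
    have subE (a b : 'rV[R]_d) j : (a - b) 0 j = a 0 j - b 0 j by rewrite !mxE.
    rewrite subE qE hk.
    have [f1 f2] : (m i)%:~R <= k%:R * x w 0 i /\ k%:R * x w 0 i < (m i + 1)%:~R.
      by have := floor_itv (k%:R * x w 0 i) => /andP[].
    rewrite intrD in f2.
    have e1 : 0 <= x w 0 i - (m i)%:~R / k%:R.
      rewrite subr_ge0 ler_pdivrMr // mulrC //.
    have e2 : x w 0 i - (m i)%:~R / k%:R <= k%:R^-1.
      rewrite -(ler_pM2r k0) mulrBl divfK ?gt_eqF // mulVf ?gt_eqF // mulrC; lra.
    rewrite !expr2; apply: ler_pM => //.
  have hsq : sqnorm (x w - q N zs) <= d%:R * harmonic N ^+ 2.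
    apply: le_trans (_ : \sum_(i < d) harmonic N ^+ 2 <= _).
      apply: ler_sum => i _; exact: hqi.
    by rewrite sumr_const card_ord mulr_natl.
  have he : enorm (x w - q N zs) <= Num.sqrt d%:R * harmonic N.
    apply: le_trans (ler_wsqrtr hsq) _.
    rewrite sqrtrM // sqrtr_sqr ger0_norm //; exact: ltW (harmonic_gt0 _).
  have he' : enorm (q N zs - x w) = enorm (x w - q N zs) by rewrite /enorm sqnormB_sym.
  apply: le_trans (bigmin_le _ _ (mem_index_enum zs)) _.
  rewrite /psi.
  have := hL (q N zs) (x w); rewrite ler_norml he' => /andP[_ h2].
  have h3 : L * enorm (x w - q N zs) <= L * (Num.sqrt d%:R * harmonic N).
    exact: ler_wpM2l.
  have h4 : c * harmonic N = 2 * (L * (Num.sqrt d%:R * harmonic N)) by rewrite /c; ring.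
  rewrite h4; lra.
- exact: cvg_cst.
- rewrite -[X in _ --> X]addr0; apply: cvgD; first exact: cvg_cst.
  rewrite -(mulr0 c); apply: cvgMr; exact: cvg_harmonic.
Qed.

End H3.

Unset Implicit Arguments. Set Strict Implicit.

Set Implicit Arguments. Unset Strict Implicit.

Section H4.
Variable R : realType.
Variable d : nat.

Lemma adam_stepE (beta1 beta2 delta eta : R) (s : 'rV[R]_d * 'rV[R]_d * 'rV[R]_d) gt :
  adam_step beta1 beta2 delta eta s gt =
  (s.1.1 - eta *: (\row_j ((beta1 *: s.1.2 + (1 - beta1) *: gt) 0 j /
      (Num.sqrt ((beta2 *: s.2 + (1 - beta2) *: map_mx (fun z => z ^+ 2) gt) 0 j) + delta))),
   beta1 *: s.1.2 + (1 - beta1) *: gt,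
   beta2 *: s.2 + (1 - beta2) *: map_mx (fun z => z ^+ 2) gt).
Proof. by case: s => [[th m] v]. Qed.

Lemma adam_stateS (beta1 beta2 delta eta : R) (th0 : 'rV[R]_d) g alpha k :
  adam_state beta1 beta2 delta eta th0 g alpha k.+1 =
  adam_step beta1 beta2 delta eta (adam_state beta1 beta2 delta eta th0 g alpha k)
    (gtilde g alpha k).
Proof. by []. Qed.

Variables (dT : measure_display) (T : measurableType dT).

Lemma inv_sqrt_cont (delta : R) : 0 < delta ->
  continuous (fun t : R => (Num.sqrt t + delta)^-1).
Proof.
move=> d0 t; apply: (@continuousV R R (fun t => Num.sqrt t + delta)).
  by rewrite gt_eqF // ltr_wpDl // sqrtr_ge0.
apply: (@continuousD _ _ _ Num.sqrt (fun=> delta)).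
  exact: sqrt_continuous.
exact: cst_continuous.
Qed.

Lemma adam_meas (beta1 beta2 delta eta : R) th0 (g : nat -> T -> 'rV[R]_d)
    (alpha : nat -> T -> R) :
  0 < delta ->
  (forall k i, measurable_fun setT (fun w => g k w 0 i)) ->
  (forall k, measurable_fun setT (alpha k)) ->
  forall k,
  let st w := adam_state beta1 beta2 delta eta th0 (fun j => g j w) (fun j => alpha j w) k in
  (forall i, measurable_fun setT (fun w => (st w).1.1 0 i)) /\
  (forall i, measurable_fun setT (fun w => (st w).1.2 0 i)) /\
  (forall i, measurable_fun setT (fun w => (st w).2 0 i)).
Proof.
move=> d0 mg ma; elim => [|k [IH1 [IH2 IH3]]] st.
  by rewrite /st /=; split; [|split] => i; under eq_fun do rewrite ?mxE; exact: measurable_cst.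
have mgt i : measurable_fun setT (fun w => gtilde (fun j => g j w) (fun j => alpha j w) k 0 i).
  rewrite /gtilde; under eq_fun do rewrite !mxE.
  apply: measurable_funD => //; apply: measurable_funM => //.
  exact: measurable_funB.
have mm i : measurable_fun setT (fun w => (st w).1.2 0 i).
  rewrite /st; under eq_fun do rewrite adam_stateS adam_stepE /= !mxE.
  apply: measurable_funD; apply: measurable_funM;
    (exact: measurable_cst) || exact: IH2 || (apply: measurable_funD => //; apply: measurable_funM => //; exact: measurable_funB).
have mv i : measurable_fun setT (fun w => (st w).2 0 i).
  rewrite /st; under eq_fun do rewrite adam_stateS adam_stepE /= !mxE.
  apply: measurable_funD; apply: measurable_funM;
    (exact: measurable_cst) || exact: IH3 || idtac.
  under eq_fun do rewrite expr2; apply: measurable_funM;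
  (apply: measurable_funD => //; apply: measurable_funM => //; exact: measurable_funB).
split; [|split] => // i.
have -> : (fun w => (st w).1.1 0 i) = (fun w =>
   (adam_state beta1 beta2 delta eta th0 (fun j => g j w) (fun j => alpha j w) k).1.1 0 i
   - eta * ((st w).1.2 0 i * (Num.sqrt ((st w).2 0 i) + delta)^-1)).
  by apply: funext => w; rewrite /st adam_stateS adam_stepE /= !mxE.
apply: measurable_funB => //; apply: measurable_funM; first exact: measurable_cst.
apply: measurable_funM => //.
exact: (measurableT_comp (continuous_measurable_fun (inv_sqrt_cont d0)) (mv i)).
Qed.

End H4.

Unset Implicit Arguments. Set Strict Implicit.

Set Implicit Arguments. Unset Strict Implicit.

Section Path.
Variables (R : realType) (d : nat).
Variables (L delta beta1 beta2 eta G ab : R).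
Variables (gradF : 'rV[R]_d -> 'rV[R]_d) (th0 : 'rV[R]_d) (g : nat -> 'rV[R]_d) (alpha : nat -> R).
Hypotheses (L0 : 0 < L) (d0 : 0 < delta) (b10 : 0 <= beta1) (b11 : beta1 < 1)
  (b20 : 0 <= beta2) (b21 : beta2 < 1) (e0 : 0 < eta) (e1 : eta <= 1) (G0 : 0 < G) (ab0 : 0 < ab).
Hypothesis lip : forall x y, enorm (gradF x - gradF y) <= L * enorm (x - y).
Hypothesis alpha_b : forall k, `|alpha k| <= 2 * ab.
Hypothesis gG : forall k, enorm (g k) <= G.
Variables (F : 'rV[R]_d -> R) (Fs : R).
Hypothesis desc : forall x v, F (x + v) <= F x + dotv (gradF x) v + L * sqnorm v.
Hypothesis Flb : forall x, Fs <= F x.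

Local Ltac pull := have ? := L0; have ? := d0; have ? := b10; have ? := b11;
  have ? := b20; have ? := b21; have ? := e0; have ? := e1; have ? := G0; have ? := ab0.

Definition Gt2 := 3 * (1 + 8 * ab ^+ 2) * G ^+ 2.
Definition U2 := Gt2 / delta ^+ 2.

Let st k := adam_state beta1 beta2 delta eta th0 g alpha k.
Let th k := (st k).1.1.
Let M k := (st k).1.2.
Let V k := (st k).2.
Let gt k := gtilde g alpha k.
Let u k := \row_j (M k.+1 0 j / (Num.sqrt (V k.+1 0 j) + delta)).

Lemma MS k : M k.+1 = beta1 *: M k + (1 - beta1) *: gt k.
Proof. by rewrite /M /st adam_stateS adam_stepE. Qed.
Lemma VS k : V k.+1 = beta2 *: V k + (1 - beta2) *: map_mx (fun z => z ^+ 2) (gt k).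
Proof. by rewrite /V /st adam_stateS adam_stepE. Qed.
Lemma VSj k j : V k.+1 0 j = beta2 * V k 0 j + (1 - beta2) * gt k 0 j ^+ 2.
Proof. by rewrite VS !mxE. Qed.
Lemma MSj k j : M k.+1 0 j = beta1 * M k 0 j + (1 - beta1) * gt k 0 j.
Proof. by rewrite MS !mxE. Qed.

Lemma thS k : th k.+1 = th k - eta *: u k.
Proof. by rewrite /th /u -/(M k.+1) -/(V k.+1) MS VS /M /V /st adam_stateS adam_stepE. Qed.

Lemma Gt2_ge0 : 0 <= Gt2.
Proof. rewrite /Gt2; apply: mulr_ge0; [apply: mulr_ge0 => //; nra|exact: sqr_ge0]. Qed.

Lemma alpha_sq k : alpha k ^+ 2 <= 4 * ab ^+ 2.
Proof. have := alpha_b k; rewrite ler_norml => /andP[h1 h2]; rewrite !expr2; nra. Qed.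

Lemma g_sq k : sqnorm (g k) <= G ^+ 2.
Proof. exact: sqnorm_le_sq. Qed.

Lemma gt_sq k : sqnorm (gt k) <= Gt2.
Proof.
pull.
have -> : gt k = g k + alpha k *: g k + (- alpha k) *: g k.-1.
  by rewrite /gt /gtilde scalerBr addrA scaleNr.
apply: le_trans (sqnormD3 _ _ _) _.
rewrite !sqnormZ sqrrN.
have h1 := g_sq k; have h2 := g_sq k.-1; have h3 := alpha_sq k.
have h4 : alpha k ^+ 2 * sqnorm (g k) <= 4 * ab ^+ 2 * G ^+ 2.
  apply: ler_pM => //; [exact: sqr_ge0|exact: sqnorm_ge0].
have h5 : alpha k ^+ 2 * sqnorm (g k.-1) <= 4 * ab ^+ 2 * G ^+ 2.
  apply: ler_pM => //; [exact: sqr_ge0|exact: sqnorm_ge0].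
rewrite /Gt2; nra.
Qed.

Lemma M_sq k : sqnorm (M k) <= Gt2.
Proof.
pull.
elim: k => [|k IH].
  rewrite /M /st /= /sqnorm big1 ?Gt2_ge0 // => i _; rewrite mxE; ring.
rewrite MS; apply: le_trans (sqnorm_convex _ _ _) _.
  by rewrite b10 ltW.
have h1 : beta1 * sqnorm (M k) <= beta1 * Gt2 by exact: ler_wpM2l.
have h2 : (1 - beta1) * sqnorm (gt k) <= (1 - beta1) * Gt2.
  apply: ler_wpM2l; last exact: gt_sq. lra.
lra.
Qed.

Lemma V_bd k j : 0 <= V k 0 j <= Gt2.
Proof.
pull.
elim: k => [|k IH].
  by rewrite /V /st /= mxE lexx Gt2_ge0.
rewrite VSj; move: IH => /andP[i1 i2].
have h := le_trans (coord_le_sqnorm (gt k) j) (gt_sq k).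
have h0 : 0 <= gt k 0 j ^+ 2 by exact: sqr_ge0.
have p1 : beta2 * V k 0 j <= beta2 * Gt2 by exact: ler_wpM2l.
have p2 : (1 - beta2) * gt k 0 j ^+ 2 <= (1 - beta2) * Gt2 by apply: ler_wpM2l => //; lra.
have p3 : 0 <= beta2 * V k 0 j by exact: mulr_ge0.
have p4 : 0 <= (1 - beta2) * gt k 0 j ^+ 2 by apply: mulr_ge0 => //; lra.
apply/andP; split; lra.
Qed.

Lemma u_sq k : sqnorm (u k) <= U2.
Proof.
pull.
rewrite /U2 /sqnorm.
apply: le_trans (_ : \sum_i (M k.+1 0 i ^+ 2 / delta ^+ 2) <= _).
  apply: ler_sum => i _; rewrite mxE.
  have s0 : 0 <= Num.sqrt (V k.+1 0 i) by exact: sqrtr_ge0.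
  rewrite expr_div_n; apply: ler_wpM2l; first exact: sqr_ge0.
  rewrite lef_pV2 ?posrE ?exprn_gt0 //; last by rewrite ltr_wpDl.
  rewrite !expr2; apply: ler_pM => //; try exact: ltW; lra.
rewrite -mulr_suml; apply: ler_wpM2r; first by rewrite invr_ge0 sqr_ge0.
exact: M_sq.
Qed.


Let nab k := gradF (th k).
Let n k := sqnorm (g k - nab k).
Definition Qc := L ^+ 2 * eta ^+ 2 * U2.

Lemma sqnormN0 (x : 'rV[R]_d) : sqnorm (- x) = sqnorm x.
Proof. by rewrite -scaleN1r sqnormZ sqrrN expr1n mul1r. Qed.

Lemma U2_ge0 : 0 <= U2.
Proof. pull. rewrite /U2; apply: divr_ge0; [exact: Gt2_ge0|exact: sqr_ge0]. Qed.

Lemma Qc_ge0 : 0 <= Qc.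
Proof. pull. rewrite /Qc; apply: mulr_ge0; [apply: mulr_ge0; exact: sqr_ge0|exact: U2_ge0]. Qed.

Lemma dth k : sqnorm (th k.+1 - th k) <= eta ^+ 2 * U2.
Proof.
pull.
rewrite thS addrAC subrr add0r sqnormN0 sqnormZ.
apply: ler_wpM2l; [exact: sqr_ge0|exact: u_sq].
Qed.

Lemma dnab k : sqnorm (nab k.+1 - nab k) <= Qc.
Proof.
pull.
apply: le_trans (sqnorm_lip (ltW L0) (lip _ _)) _.
rewrite /Qc -mulrA; apply: ler_wpM2l; [exact: sqr_ge0|exact: dth].
Qed.

Lemma dnab' k : sqnorm (nab k - nab k.-1) <= Qc.
Proof.
pull.
case: k => [|k] /=.
  by rewrite subrr /sqnorm big1 ?Qc_ge0 // => i _; rewrite mxE expr2 mulr0.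
exact: dnab.
Qed.

Lemma dotvNZ (a v : 'rV[R]_d) (c : R) : dotv a (- (c *: v)) = - (c * dotv a v).
Proof. rewrite /dotv mulr_sumr -sumrN; apply: eq_bigr => i _; rewrite !mxE; ring. Qed.

Definition wl := (1 + Gt2 + delta)^-1.

Lemma wl_gt0 : 0 < wl.
Proof. pull. rewrite /wl invr_gt0; have := Gt2_ge0; lra. Qed.

Lemma inner k : wl / 2 * sqnorm (nab k) - sqnorm (M k.+1 - nab k) / (2 * delta)
  <= dotv (nab k) (u k).
Proof.
pull.
rewrite /dotv /sqnorm mulr_sumr mulr_suml -sumrB; apply: ler_sum => j _.
rewrite !mxE.
set a := nab k 0 j; set m := M k.+1 0 j; set s := Num.sqrt (V k.+1 0 j).
have s0 : 0 <= s by exact: sqrtr_ge0.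
have hv := V_bd k.+1 j; move: hv => /andP[v0 v1].
have ss : s ^+ 2 = V k.+1 0 j by rewrite sqr_sqrtr.
have s1 : s <= 1 + Gt2.
  have : 0 <= (s - 1) ^+ 2 + s by apply: addr_ge0 => //; exact: sqr_ge0.
  rewrite !expr2 in ss *; nra.
set w := (s + delta)^-1.
have w0 : 0 < w by rewrite /w invr_gt0; lra.
have wl1 : wl <= w by rewrite /wl /w lef_pV2 ?posrE; lra.
have wd : w <= delta^-1 by rewrite /w lef_pV2 ?posrE; lra.
have e1' : a * m >= a ^+ 2 / 2 - (m - a) ^+ 2 / 2.
  have : 0 <= m ^+ 2 by exact: sqr_ge0.
  rewrite !expr2; lra.
have p1 : w * (a * m) >= w * (a ^+ 2 / 2 - (m - a) ^+ 2 / 2) by apply: ler_wpM2l => //; exact: ltW.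
have p2 : wl * (a ^+ 2 / 2) <= w * (a ^+ 2 / 2).
  by apply: ler_wpM2r => //; apply: divr_ge0 => //; exact: sqr_ge0.
have p3 : w * ((m - a) ^+ 2 / 2) <= delta^-1 * ((m - a) ^+ 2 / 2).
  by apply: ler_wpM2r => //; apply: divr_ge0 => //; exact: sqr_ge0.
have -> : a * (m / (s + delta)) = w * (a * m) by rewrite /w; ring.
have -> : (m - a) ^+ 2 / (2 * delta) = delta^-1 * ((m - a) ^+ 2 / 2).
  by field; rewrite gt_eqF.
have -> : wl / 2 * a ^+ 2 = wl * (a ^+ 2 / 2) by ring.
lra.
Qed.


Definition epsc := (1 - beta1) / 2.
Let E k := sqnorm (M k.+1 - nab k).
Let A k := sqnorm (M k - nab k).
Let Hh k := sqnorm (gt k - nab k).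

Lemma epsc_gt0 : 0 < epsc.
Proof. pull. rewrite /epsc; lra. Qed.

Lemma E_le k : E k <= beta1 * A k + (1 - beta1) * Hh k.
Proof.
pull. rewrite /E /A /Hh.
have -> : M k.+1 - nab k = beta1 *: (M k - nab k) + (1 - beta1) *: (gt k - nab k).
  apply/rowP => j; rewrite !mxE MSj !mxE; ring.
apply: sqnorm_convex; lra.
Qed.

Lemma A_le k : A k.+1 <= (1 + epsc) * E k + (1 + epsc^-1) * Qc.
Proof.
pull. rewrite /E /A.
have -> : M k.+1 - nab k.+1 = (M k.+1 - nab k) + (nab k - nab k.+1).
  by rewrite addrA subrK.
apply: le_trans (sqnorm_eps _ _ epsc_gt0) _.
rewrite lerD2l; apply: ler_wpM2l.
  by have := epsc_gt0; rewrite -invr_gt0; lra.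
by rewrite sqnormB_sym; exact: dnab.
Qed.

Definition cg := 2 + 24 * ab ^+ 2.

Lemma H_le k : Hh k <= cg * (n k + n k.-1) + 24 * ab ^+ 2 * Qc.
Proof.
pull. rewrite /Hh.
have -> : gt k - nab k = (g k - nab k) + alpha k *: (g k - g k.-1).
  by rewrite /gt /gtilde addrAC.
apply: le_trans (sqnormD2 _ _) _.
rewrite sqnormZ -[sqnorm (g k - nab k)]/(n k).
have h3 : sqnorm (g k - g k.-1) <= 3 * n k + 3 * Qc + 3 * n k.-1.
  have -> : g k - g k.-1 = (g k - nab k) + (nab k - nab k.-1) + (nab k.-1 - g k.-1).
    by apply/rowP => j; rewrite !mxE; ring.
  apply: le_trans (sqnormD3 _ _ _) _.
  rewrite [sqnorm (nab k.-1 - g k.-1)]sqnormB_sym -[sqnorm (g k - nab k)]/(n k)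
     -[sqnorm (g k.-1 - nab k.-1)]/(n k.-1).
  have := dnab' k; lra.
have ha := alpha_sq k.
have p : alpha k ^+ 2 * sqnorm (g k - g k.-1) <= 4 * ab ^+ 2 * (3 * n k + 3 * Qc + 3 * n k.-1).
  apply: ler_pM => //; [exact: sqr_ge0|exact: sqnorm_ge0].
have hn1 : 0 <= n k.-1 by exact: sqnorm_ge0.
rewrite /cg; lra.
Qed.

Lemma A0_le : A 0 <= 2 * G ^+ 2 + 2 * n 0.
Proof.
pull. rewrite /A.
have -> : M 0 - nab 0 = (g 0 - nab 0) + (- g 0).
  by rewrite /M /st /= add0r addrC addKr.
apply: le_trans (sqnormD2 _ _) _.
rewrite sqnormN0; have := g_sq 0; rewrite /n; lra.
Qed.


Lemma SA T : \sum_(k < T.+1) A k <= A 0 + (1 + epsc) * \sum_(k < T) E k + T%:R * ((1 + epsc^-1) * Qc).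
Proof.
pull.
elim: T => [|T IH].
  by rewrite big_ord_recr big_ord0 big_ord0 /= add0r mulr0 mul0r !addr0.
rewrite [\sum_(k < T.+2) _]big_ord_recr /= [\sum_(k < T.+1) E k]big_ord_recr /= -natr1.
have := A_le T; lra.
Qed.

Lemma SEb T : epsc * \sum_(k < T) E k <= A 0 + T%:R * ((1 + epsc^-1) * Qc) + \sum_(k < T) Hh k.
Proof.
pull.
set SE := \sum_(k < T) E k; set SH := \sum_(k < T) Hh k; set SAv := \sum_(k < T) A k.
set X := T%:R * ((1 + epsc^-1) * Qc).
have h1 : SE <= beta1 * SAv + (1 - beta1) * SH.
  rewrite /SE /SAv /SH !mulr_sumr -big_split /=; apply: ler_sum => k _; exact: E_le.
have h2 : SAv <= A 0 + (1 + epsc) * SE + X.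
  apply: le_trans _ (SA T); rewrite big_ord_recr /= lerDl; exact: sqnorm_ge0.
have X0 : 0 <= X.
  apply: mulr_ge0 => //; apply: mulr_ge0; last exact: Qc_ge0.
  by have := epsc_gt0; rewrite -invr_gt0; lra.
have A00 : 0 <= A 0 by exact: sqnorm_ge0.
have SE0 : 0 <= SE by apply: sumr_ge0 => k _; exact: sqnorm_ge0.
have SH0 : 0 <= SH by apply: sumr_ge0 => k _; exact: sqnorm_ge0.
have p1 : beta1 * SAv <= beta1 * (A 0 + (1 + epsc) * SE + X) by exact: ler_wpM2l.
have p2 : (1 - beta1) * SH <= SH by rewrite -[leRHS]mul1r; apply: ler_wpM2r => //; lra.
have p3 : beta1 * A 0 <= A 0 by rewrite -[leRHS]mul1r; apply: ler_wpM2r => //; lra.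
have p4 : beta1 * X <= X by rewrite -[leRHS]mul1r; apply: ler_wpM2r => //; lra.
have p5 : 0 <= (1 - beta1) ^+ 2 * SE by apply: mulr_ge0 => //; exact: sqr_ge0.
rewrite /epsc in p1 p5 *; rewrite !expr2 in p5; nra.
Qed.

Lemma SHb T : \sum_(k < T) Hh k <= cg * \sum_(k < T) (n k + n k.-1) + T%:R * (24 * ab ^+ 2 * Qc).
Proof.
apply: le_trans (_ : _ <= \sum_(k < T) (cg * (n k + n k.-1) + 24 * ab ^+ 2 * Qc)) _.
  by apply: ler_sum => k _; exact: H_le.
by rewrite big_split /= -mulr_sumr sumr_const card_ord [T%:R * _]mulr_natl.
Qed.

Lemma desc_step k : F (th k.+1) <= F (th k) - eta * dotv (nab k) (u k) + L * (eta ^+ 2 * U2).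
Proof.
pull.
rewrite thS; apply: le_trans (desc _ _) _.
rewrite dotvNZ sqnormN0 sqnormZ -/(nab k).
have := u_sq k => h.
have : L * (eta ^+ 2 * sqnorm (u k)) <= L * (eta ^+ 2 * U2).
  apply: ler_wpM2l; first exact: ltW.
  by apply: ler_wpM2l => //; exact: sqr_ge0.
lra.
Qed.

Lemma DS T : eta * \sum_(k < T) (wl / 2 * sqnorm (nab k) - E k / (2 * delta))
  <= F (th 0) - F (th T) + T%:R * (L * (eta ^+ 2 * U2)).
Proof.
pull.
elim: T => [|T IH].
  by rewrite big_ord0 mulr0 subrr mul0r addr0.
rewrite big_ord_recr /= mulrDr -[T.+1%:R]natr1.
have h1 := inner T.
have h2 : eta * (wl / 2 * sqnorm (nab T) - E T / (2 * delta)) <= eta * dotv (nab T) (u T).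
  by apply: ler_wpM2l => //; exact: ltW.
have := desc_step T; lra.
Qed.

Definition ccc := (wl * delta * epsc)^-1.
Definition K1c := 2 / wl.
Definition K2c := 2 / wl * (L * U2) + ccc * ((1 + epsc^-1) + 24 * ab ^+ 2) * (L ^+ 2 * U2).
Definition K3c := 2 * ccc.
Definition K4c := ccc * (2 + cg).

Lemma pathwise T : (1 <= T)%N ->
  \sum_(k < T) sqnorm (nab k) <= K1c * ((F th0 - Fs) / eta) + K2c * (T%:R * eta)
     + K3c * G ^+ 2 + K4c * \sum_(k < T) (n k + n k.-1).
Proof.
pull.
move=> T1.
set SG := \sum_(k < T) sqnorm (nab k).
set SE := \sum_(k < T) E k.
set W := \sum_(k < T) (n k + n k.-1).
set X := (F th0 - Fs) / eta.
set Y := T%:R * eta.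
have wl0 := wl_gt0.
have ep0 := epsc_gt0.
have U0 := U2_ge0.
have Y0 : 0 <= Y by apply: mulr_ge0 => //; exact: ltW.
have s1 : wl / 2 * SG - SE / (2 * delta) <= X + L * U2 * Y.
  have h := DS T.
  rewrite sumrB -mulr_sumr -mulr_suml -/SG -/SE in h.
  have hF : Fs <= F (th T) by exact: Flb.
  have hth0 : th 0 = th0 by [].
  rewrite hth0 in h.
  rewrite -(ler_pM2l e0).
  have -> : eta * (X + L * U2 * Y) = F th0 - Fs + T%:R * (L * (eta ^+ 2 * U2)).
    by rewrite /X /Y; field; rewrite gt_eqF.
  lra.
have n00 : n 0 <= W.
  rewrite /W (bigD1 (Ordinal T1)) //=.
  have : 0 <= \sum_(i < T | i != Ordinal T1) (n i + n i.-1).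
    by apply: sumr_ge0 => i _; apply: addr_ge0; exact: sqnorm_ge0.
  have : 0 <= n 0 by exact: sqnorm_ge0.
  lra.
have W0 : 0 <= W by apply: sumr_ge0 => i _; apply: addr_ge0; exact: sqnorm_ge0.
have TQ : T%:R * Qc <= L ^+ 2 * U2 * Y.
  rewrite /Qc /Y.
  have h : eta ^+ 2 <= eta by rewrite expr2 -[leRHS]mulr1; apply: ler_wpM2l => //; exact: ltW.
  have c0 : 0 <= T%:R * L ^+ 2 * U2 :> R.
    by apply: mulr_ge0 => //; apply: mulr_ge0 => //; exact: sqr_ge0.
  have -> : T%:R * (L ^+ 2 * eta ^+ 2 * U2) = (T%:R * L ^+ 2 * U2) * eta ^+ 2 :> R by ring.
  have -> : L ^+ 2 * U2 * (T%:R * eta) = (T%:R * L ^+ 2 * U2) * eta :> R by ring.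
  exact: ler_wpM2l.
have cQ0 : 0 <= (1 + epsc^-1) + 24 * ab ^+ 2.
  have : 0 < epsc^-1 by rewrite invr_gt0.
  have : 0 <= ab ^+ 2 by exact: sqr_ge0.
  lra.
set B := 2 * G ^+ 2 + (2 + cg) * W + ((1 + epsc^-1) + 24 * ab ^+ 2) * (L ^+ 2 * U2 * Y).
have s3 : epsc * SE <= B.
  have h := SEb T; have hh := SHb T; have ha := A0_le.
  rewrite -/SE in h; rewrite -/W in hh.
  have q1 : T%:R * ((1 + epsc^-1) * Qc) + T%:R * (24 * ab ^+ 2 * Qc)
     = ((1 + epsc^-1) + 24 * ab ^+ 2) * (T%:R * Qc) by ring.
  have q2 : ((1 + epsc^-1) + 24 * ab ^+ 2) * (T%:R * Qc) <=
            ((1 + epsc^-1) + 24 * ab ^+ 2) * (L ^+ 2 * U2 * Y) by exact: ler_wpM2l.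
  rewrite /B /cg in hh *.
  have : 0 <= 24 * ab ^+ 2 * W by apply: mulr_ge0 => //; apply: mulr_ge0 => //; exact: sqr_ge0.
  lra.
have s4 : SE / (wl * delta) <= ccc * B.
  have -> : SE / (wl * delta) = ccc * (epsc * SE).
    by rewrite /ccc; field; rewrite !gt_eqF.
  apply: ler_wpM2l => //; rewrite /ccc invr_ge0; apply: mulr_ge0 => //;
    [apply: mulr_ge0|]; exact: ltW.
have s2 : SG <= K1c * (X + L * U2 * Y) + SE / (wl * delta).
  have : 2 / wl * (wl / 2 * SG - SE / (2 * delta)) <= 2 / wl * (X + L * U2 * Y).
    by apply: ler_wpM2l => //; apply: divr_ge0 => //; exact: ltW.
  have -> : 2 / wl * (wl / 2 * SG - SE / (2 * delta)) = SG - SE / (wl * delta).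
    by field; rewrite !gt_eqF.
  rewrite /K1c; lra.
have -> : K1c * X + K2c * Y + K3c * G ^+ 2 + K4c * W = K1c * (X + L * U2 * Y) + ccc * B.
  by rewrite /B /K1c /K2c /K3c /K4c; ring.
lra.
Qed.

End Path.

Unset Implicit Arguments. Set Strict Implicit.

Lemma consts_pos (R : realType) (L delta beta1 G ab : R) :
  0 < L -> 0 < delta -> 0 <= beta1 -> beta1 < 1 -> 0 < G -> 0 < ab ->
  [/\ 0 < K1c delta G ab, 0 < K2c L delta beta1 G ab, 0 < K3c delta beta1 G ab
    & 0 < K4c delta beta1 G ab].
Proof.
move=> L0 d0 b10 b11 G0 ab0.
have Gt0 : 0 < Gt2 G ab.
  rewrite /Gt2; apply: mulr_gt0; last exact: exprn_gt0.
  apply: mulr_gt0 => //; have : 0 <= ab ^+ 2 by exact: sqr_ge0.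
  lra.
have wl0 : 0 < wl delta G ab by rewrite /wl invr_gt0; lra.
have U0 : 0 < U2 delta G ab by rewrite /U2; apply: divr_gt0 => //; exact: exprn_gt0.
have ep0 : 0 < epsc beta1 by rewrite /epsc; lra.
have c0 : 0 < ccc delta beta1 G ab.
  by rewrite /ccc invr_gt0; apply: mulr_gt0 => //; apply: mulr_gt0.
have cg0 : 0 < cg ab.
  rewrite /cg; have : 0 <= ab ^+ 2 by exact: sqr_ge0.
  lra.
split.
- by rewrite /K1c; apply: divr_gt0.
- have t1 : 0 < 2 / wl delta G ab * (L * U2 delta G ab).
    by apply: mulr_gt0; [exact: divr_gt0|exact: mulr_gt0].
  have cq : 0 <= (1 + (epsc beta1)^-1) + 24 * ab ^+ 2.
    have : 0 < (epsc beta1)^-1 by rewrite invr_gt0.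
    have : 0 <= ab ^+ 2 by exact: sqr_ge0.
    lra.
  have t2 : 0 <= ccc delta beta1 G ab * ((1 + (epsc beta1)^-1) + 24 * ab ^+ 2) * (L ^+ 2 * U2 delta G ab).
    apply: mulr_ge0; first (apply: mulr_ge0 => //; exact: ltW).
    apply: mulr_ge0; [exact: sqr_ge0|exact: ltW].
  rewrite /K2c; lra.
- by rewrite /K3c; apply: mulr_gt0.
- rewrite /K4c; apply: mulr_gt0 => //; lra.
Qed.

Lemma coord_le_enorm (R : realType) (d : nat) (v : 'rV[R]_d) i : `|v 0 i| <= enorm v.
Proof.
rewrite -sqrtr_sqr /enorm; apply: ler_wsqrtr; exact: coord_le_sqnorm.
Qed.

Lemma sigma_of_setT (R : realType) (T : Type) (d : nat) (X : T -> 'rV[R]_d) :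
  sigma_of X setT.
Proof.
rewrite /sigma_of => F [[F0 FC _] _]; have := FC set0 F0; by rewrite setD0.
Qed.

Theorem theorem1 (R : realType) (d : nat) (L delta beta1 G alpha_base : R) :
  0 < L -> 0 < delta -> 0 <= beta1 < 1 -> 0 < G -> 0 < alpha_base ->
  exists C1 C2 C3 : R, 0 < C1 /\ 0 < C2 /\ 0 < C3 /\
  forall (dO : measure_display) (Omega : measurableType dO)
         (P : probability Omega R)
         (F : 'rV[R]_d -> R) (gradF : 'rV[R]_d -> 'rV[R]_d)
         (beta2 eta sigma : R) (th0 : 'rV[R]_d)
         (g : nat -> Omega -> 'rV[R]_d) (alpha : nat -> Omega -> R),
    (* F is differentiable with gradient gradF, which is L-Lipschitz *)
    (forall x, differentiable F x) ->
    (forall x v, 'd F x v = dotv (gradF x) v) ->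
    (forall x y, enorm (gradF x - gradF y) <= L * enorm (x - y)) ->
    (* F is bounded below *)
    has_lbound (range F) ->
    (* parameters *)
    0 <= beta2 < 1 -> 0 < eta -> eta <= Num.min 1 L^-1 -> 0 <= sigma ->
    (* curvature coefficients *)
    (forall k, measurable_fun setT (alpha k)) ->
    (forall w, alpha 0%N w = 0) ->
    (forall k w, `|alpha k w| <= 2 * alpha_base) ->
    (* stochastic gradients *)
    (forall k (i : 'I_d), measurable_fun setT (fun w => g k w 0 i)) ->
    (forall k w, enorm (g k w) <= G) ->
    let theta k w := adam_theta beta1 beta2 delta eta th0
                       (fun j => g j w) (fun j => alpha j w) k in
    (* E[g_k | theta_k] = gradF(theta_k) *)
    (forall k (i : 'I_d) (A : set Omega), sigma_of (theta k) A ->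
       (\int[P]_(w in A) (g k w 0 i - gradF (theta k w) 0 i)%:E = 0)%E) ->
    (* E[ ||g_k - gradF(theta_k)||^2 | theta_k ] <= sigma^2 *)
    (forall k (A : set Omega), sigma_of (theta k) A ->
       (\int[P]_(w in A) (sqnorm (g k w - gradF (theta k w)))%:E
          <= (sigma ^+ 2)%:E * P A)%E) ->
    forall T : nat, (1 <= T)%N ->
      ((T%:R^-1)%:E * \sum_(k < T) \int[P]_w (sqnorm (gradF (theta k w)))%:E
        <= ((C1 * (F th0 - inf (range F) + G ^+ 2)) / (eta * T%:R)
             + C2 * eta + C3 * sigma ^+ 2)%:E)%E.
Proof.
move=> L0 d0 /andP[b10 b11] G0 ab0.
have [K1p K2p K3p K4p] := @consts_pos R L delta beta1 G alpha_base L0 d0 b10 b11 G0 ab0.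
set K1 := K1c delta G alpha_base in K1p *.
set K2 := K2c L delta beta1 G alpha_base in K2p *.
set K3 := K3c delta beta1 G alpha_base in K3p *.
set K4 := K4c delta beta1 G alpha_base in K4p *.
exists (K1 + K3), K2, (2 * K4).
split; first exact: addr_gt0.
split => //.
split; first exact: mulr_gt0.
move=> dO Omega P F gradF beta2 eta sigma th0 g alpha dF dFE lip hlb
  /andP[b20 b21] e0 emin s0 ma a0 ab gm gG theta hce hvar T T1.
have e1 : eta <= 1 by move: emin; rewrite le_min => /andP[].
set Fs := inf (range F).
have Flb : forall x, Fs <= F x.
  by move=> x; apply: ge_inf => //; exists x.
have desc := descent L0 dF dFE lip.
pose fG k w := sqnorm (gradF (theta k w)).
pose nn k w := sqnorm (g k w - gradF (theta k w)).
pose Wf w := \sum_(k < T) (nn k w + nn k.-1 w).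
pose c0 := K1 * ((F th0 - Fs) / eta) + K2 * (T%:R * eta) + K3 * G ^+ 2.
have PW w : \sum_(k < T) fG k w <= c0 + K4 * Wf w.
  exact: (@pathwise R d L delta beta1 beta2 eta G alpha_base gradF th0
     (fun j => g j w) (fun j => alpha j w) L0 d0 b10 b11 b20 b21 e0 e1 G0 ab0 lip
     (fun k => ab k w) (fun k => gG k w) F Fs desc Flb T T1).
have mth k i : measurable_fun setT (fun w => theta k w 0 i).
  exact: ((adam_meas beta1 beta2 eta th0 d0 gm ma k).1 i).
have mgr k i : measurable_fun setT (fun w => gradF (theta k w) 0 i).
  apply: (@lip_measurable R dO Omega d (fun x => gradF x 0 i) L (theta k) (ltW L0)) => //.
  move=> a b; apply: le_trans (lip a b).
  have := @coord_le_enorm R d (gradF a - gradF b) i; by rewrite !mxE.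
have mfG k : measurable_fun setT (fG k).
  rewrite /fG /sqnorm; apply: measurable_sum => i; exact: measurable_sq.
have mnn k : measurable_fun setT (nn k).
  rewrite /nn /sqnorm; apply: measurable_sum => i.
  under eq_fun do rewrite !mxE.
  by apply: measurable_sq; apply: measurable_funB.
have mW : measurable_fun setT Wf.
  rewrite /Wf; apply: measurable_sum => k; exact: measurable_funD.
have fG0 k w : 0 <= fG k w by exact: sqnorm_ge0.
have nn0 k w : 0 <= nn k w by exact: sqnorm_ge0.
have W0 w : 0 <= Wf w by apply: sumr_ge0 => k _; exact: addr_ge0.
have X0 : 0 <= (F th0 - Fs) / eta.
  by apply: divr_ge0; [rewrite subr_ge0; exact: Flb|exact: ltW].
have c00 : 0 <= c0.
  rewrite /c0; apply: addr_ge0; first apply: addr_ge0.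
  - by apply: mulr_ge0 => //; exact: ltW.
  - by apply: mulr_ge0; [exact: ltW|apply: mulr_ge0 => //; exact: ltW].
  - by apply: mulr_ge0; [exact: ltW|exact: sqr_ge0].
have Inn k : (\int[P]_w (nn k w)%:E <= (sigma ^+ 2)%:E)%E.
  have := hvar k setT (@sigma_of_setT R _ _ _); by rewrite probability_setT mule1.
have eA : (\sum_(k < T) \int[P]_w (fG k w)%:E = \int[P]_w (\sum_(k < T) fG k w)%:E)%E.
  rewrite -(@ge0_integral_sum _ _ _ P setT measurableT _ (fun (k : 'I_T) w => (fG k w)%:E)) //.
  - by apply: eq_integral => w _; rewrite sumEFin.
  - by move=> k; apply/measurable_EFinP; exact: mfG.
  - by move=> k w _; rewrite lee_fin.
have eB : (\int[P]_w (\sum_(k < T) fG k w)%:E <= \int[P]_w (c0 + K4 * Wf w)%:E)%E.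
  apply: ge0_le_integral => //.
  - by move=> w _; rewrite lee_fin; apply: sumr_ge0 => k _.
  - apply/measurable_EFinP; apply: measurable_sum => k; exact: mfG.
  - apply/measurable_EFinP; apply: measurable_funD; first exact: measurable_cst.
    by apply: measurable_funM => //; exact: measurable_cst.
  - by move=> w _; rewrite lee_fin; exact: PW.
have eC : (\int[P]_w (c0 + K4 * Wf w)%:E = c0%:E + K4%:E * \int[P]_w (Wf w)%:E)%E.
  under eq_integral do rewrite EFinD.
  have m1 : measurable_fun setT (fun _ : Omega => c0%:E) by exact: measurable_cst.
  have m2 : measurable_fun setT (fun w => (K4 * Wf w)%:E).
    apply/measurable_EFinP; apply: measurable_funM => //; exact: measurable_cst.
  have p1 : forall w : Omega, setT w -> (0 <= c0%:E)%E by move=> w _; rewrite lee_fin.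
  have p2 : forall w : Omega, setT w -> (0 <= (K4 * Wf w)%:E)%E.
    move=> w _; rewrite lee_fin; apply: mulr_ge0 => //; exact: ltW.
  rewrite (ge0_integralD P measurableT p1 m1 p2 m2).
  rewrite integral_cst //; set m := (X in (c0%:E * X + _)%E).
  have -> : m = 1%E by exact: probability_setT.
  rewrite mule1; congr (_ + _)%E.
  under eq_integral do rewrite EFinM.
  rewrite ge0_integralZl_EFin //.
  + by move=> w _; rewrite lee_fin.
  + by apply/measurable_EFinP.
  + exact: ltW.
have eD : (\int[P]_w (Wf w)%:E <= (T%:R * (2 * sigma ^+ 2))%:E)%E.
  have -> : (\int[P]_w (Wf w)%:E = \sum_(k < T) (\int[P]_w (nn k w)%:E + \int[P]_w (nn k.-1 w)%:E))%E.
    rewrite /Wf.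
    under eq_integral do rewrite -sumEFin.
    rewrite (@ge0_integral_sum _ _ _ P setT measurableT _ (fun (k : 'I_T) w => (nn k w + nn k.-1 w)%:E)) //.
    - apply: eq_bigr => k _; under eq_integral do rewrite EFinD.
      rewrite ge0_integralD //.
      + by move=> w _; rewrite lee_fin.
      + by apply/measurable_EFinP.
      + by move=> w _; rewrite lee_fin.
      + by apply/measurable_EFinP.
    - by move=> k; apply/measurable_EFinP; apply: measurable_funD.
    - by move=> k w _; rewrite lee_fin; apply: addr_ge0.
  apply: le_trans (_ : (\sum_(k < T) ((sigma ^+ 2)%:E + (sigma ^+ 2)%:E) <= _)%E).
    by apply: lee_sum => k _; apply: leeD.
  rewrite sumEFin lee_fin sumr_const card_ord -mulr_natl; lra.
have I1 : (\sum_(k < T) \int[P]_w (fG k w)%:E <= (c0 + K4 * (T%:R * (2 * sigma ^+ 2)))%:E)%E.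
  rewrite eA; apply: le_trans eB _; rewrite eC (EFinD c0); apply: leeD => //.
  rewrite [(K4 * _)%:E]EFinM.
  by apply: lee_wpmul2l => //; rewrite lee_fin; exact: ltW.
have T0 : 0 < T%:R :> R by rewrite ltr0n.
apply: le_trans (lee_wpmul2l _ I1) _; first by rewrite lee_fin invr_ge0 ltW.
rewrite -EFinM lee_fin.
set D := F th0 - Fs.
have D0 : 0 <= D by rewrite /D subr_ge0; exact: Flb.
set a := (eta * T%:R)^-1.
have apos : 0 < a by rewrite /a invr_gt0 mulr_gt0.
have eq1 : T%:R^-1 * (c0 + K4 * (T%:R * (2 * sigma ^+ 2)))
   = K1 * D * a + K2 * eta + K3 * G ^+ 2 * eta * a + 2 * K4 * sigma ^+ 2.
  by rewrite /c0 /a /D; field; rewrite !gt_eqF.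
have eq2 : (K1 + K3) * (D + G ^+ 2) / (eta * T%:R) = (K1 + K3) * (D + G ^+ 2) * a by [].
rewrite eq1 eq2.
have p1 : 0 <= K1 * G ^+ 2 * a by apply: mulr_ge0; [apply: mulr_ge0; [exact: ltW|exact: sqr_ge0]|exact: ltW].
have p2 : 0 <= K3 * D * a by apply: mulr_ge0; [apply: mulr_ge0 => //; exact: ltW|exact: ltW].
have p3 : 0 <= K3 * G ^+ 2 * a * (1 - eta).
  apply: mulr_ge0; last by lra.
  by apply: mulr_ge0; [apply: mulr_ge0; [exact: ltW|exact: sqr_ge0]|exact: ltW].
lra.
Qed.
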